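(* Let $\gamma>0$, $\mu_1,\mu_2>0$, and let $\tilde G^1_{\gamma,\mu_1}$ and $\tilde G^2_{-\gamma,\mu_2}$ be independent. Then for every $t>0$, $\tilde G^1_{\gamma,\mu_1}(\tilde G^2_{-\gamma,\mu_2}(t))$ has density $$q(x,t)=\gamma\,\frac{x^{\gamma\mu_1-1}t^{\gamma\mu_2}}{(x^\gamma+t^\gamma)^{\mu_1+\mu_2}}\,\frac{\Gamma(\mu_1+\mu_2)}{\Gamma(\mu_1)\Gamma(\mu_2)},\qquad x>0,$$ and $\tilde G^1_{\gamma,\mu_1}(\tilde G^2_{-\gamma,\mu_2}(t))$ has the same distribution as $\tilde G^1_{\gamma,\mu_1}(t^{1/2})\,\tilde G^2_{-\gamma,\mu_2}(t^{1/2})$. Moreover, when $\mu_1=\mu_2=\mu$, $\tilde G^1_{-\gamma,\mu}(\tilde G^2_{\gamma,\mu}(t))$ has the same distribution as $\tilde G^1_{\gamma,\mu}(\tilde G^2_{-\gamma,\mu}(t))$ for every $t>0$.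
   Context: For $\gamma>0,\mu>0$: $\tilde G_{\gamma,\mu}(t)$ is a positive process whose value at time $t$ has density $\gamma (x/t)^{\mu\gamma-1}e^{-(x/t)^{\gamma}}/(t\Gamma(\mu))$, $x>0$; $\tilde G_{-\gamma,\mu}(t)$ is a positive process whose value at time $t$ has density $\gamma (x/t)^{-\mu\gamma-1}e^{-(x/t)^{-\gamma}}/(t\Gamma(\mu))$, $x>0$. Composition of independent processes: if $X$ has marginal densities $f_X(x,s)$ and $Y\ge0$ is independent with marginal densities $f_Y(s,t)$, then $X(Y(t))$ has density $\int_0^\infty f_X(x,s)f_Y(s,t)\,ds$. *)

(* Defs.v *)
From Stdlib Require Import Reals Lra ClassicalEpsilon.
Open Scope R_scope.

Definition improper_integral (f : R -> R) (l : R) : Prop :=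
  (forall a b : R, 0 < a -> a <= b -> inhabited (Riemann_integrable f a b)) /\
  (forall eps : R, 0 < eps ->
     exists d : R, 0 < d /\ exists M : R, 0 < M /\
       forall (a b : R) (pr : Riemann_integrable f a b),
         0 < a -> a < d -> M < b -> Rabs (RiemannInt pr - l) < eps).

Definition Gamma (mu : R) : R :=
  epsilon (inhabits 0)
    (improper_integral (fun s => Rpower s (mu - 1) * exp (- s))).

(* density at x > 0 of G~_{gamma,mu}(t), gamma > 0 *)
Definition Gdens (gamma mu x t : R) : R :=
  gamma * Rpower (x / t) (mu * gamma - 1) * exp (- Rpower (x / t) gamma)
  / (t * Gamma mu).

(* density at x > 0 of G~_{-gamma,mu}(t), gamma > 0 *)
Definition Gdens_neg (gamma mu x t : R) : R :=
  gamma * Rpower (x / t) (- mu * gamma - 1) * exp (- Rpower (x / t) (- gamma))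
  / (t * Gamma mu).

Definition q_dens (gamma mu1 mu2 x t : R) : R :=
  gamma * (Rpower x (gamma * mu1 - 1) * Rpower t (gamma * mu2)
           / Rpower (Rpower x gamma + Rpower t gamma) (mu1 + mu2))
  * (Gamma (mu1 + mu2) / (Gamma mu1 * Gamma mu2)).

(* Main.v *)
Require Import Defs.
From Stdlib Require Import Reals Lra ClassicalEpsilon Classical.
From Coquelicot Require Import Coquelicot.
Open Scope R_scope.

Definition imp2 (f : R -> R) (l : R) : Prop :=
  (forall a b, 0 < a -> a <= b -> ex_RInt f a b) /\
  (forall eps, 0 < eps -> exists d, 0 < d /\ exists M, d <= M /\
     forall a b, 0 < a -> a < d -> M < b -> Rabs (RInt f a b - l) < eps).

Lemma imp2_imp f l : imp2 f l -> improper_integral f l.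
Proof.
  intros [H1 H2]; split.
  - intros a b Ha Hab. constructor. apply ex_RInt_Reals_0. auto.
  - intros eps He. destruct (H2 eps He) as [d [Hd [M [HM H]]]].
    exists d; split; auto. exists M; split; [lra|].
    intros a b pr Ha Had HMb. rewrite <- (RInt_Reals f a b pr). auto.
Qed.

Lemma imp_imp2 f l : improper_integral f l -> imp2 f l.
Proof.
  intros [H1 H2]; split.
  - intros a b Ha Hab. destruct (H1 a b Ha Hab) as [pr]. apply ex_RInt_Reals_1. exact pr.
  - intros eps He. destruct (H2 eps He) as [d [Hd [M [HM H]]]].
    exists (Rmin d 1); split. { apply Rmin_glb_lt; lra. }
    exists (Rmax M 1); split. { apply Rle_trans with 1. apply Rmin_r. apply Rmax_r. }
    intros a b Ha Had HMb.
    assert (a < d) by (eapply Rlt_le_trans; [exact Had| apply Rmin_l]).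
    assert (M < b) by (eapply Rle_lt_trans; [apply Rmax_l| exact HMb]).
    assert (a <= b).
    { assert (Rmin d 1 <= 1) by apply Rmin_r. assert (1 <= Rmax M 1) by apply Rmax_r. lra. }
    destruct (H1 a b Ha H4) as [pr].
    rewrite (RInt_Reals f a b pr). auto.
Qed.

Lemma imp2_ext f g l : (forall s, 0 < s -> f s = g s) -> imp2 f l -> imp2 g l.
Proof.
  intros E [H1 H2]; split.
  - intros a b Ha Hab. apply ex_RInt_ext with f; [|auto].
    intros x Hx. apply E. rewrite Rmin_left in Hx by lra. lra.
  - intros eps He. destruct (H2 eps He) as [d [Hd [M [HM H]]]].
    exists d; split; auto. exists M; split; auto.
    intros a b Ha Had HMb. rewrite <- (RInt_ext f g).
    + auto.
    + intros x Hx. apply E. rewrite Rmin_left in Hx by lra. lra.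
Qed.

Lemma imp2_scal f l K : imp2 f l -> imp2 (fun s => K * f s) (K * l).
Proof.
  intros [H1 H2]; split.
  - intros a b Ha Hab. apply (ex_RInt_scal f a b K). auto.
  - intros eps He.
    destruct (H2 (eps / (Rabs K + 1))) as [d [Hd [M [HM H]]]].
    { apply Rdiv_lt_0_compat; auto. pose proof (Rabs_pos K); lra. }
    exists d; split; auto. exists M; split; auto.
    intros a b Ha Had HMb.
    assert (Hab : a <= b) by lra.
    replace (RInt (fun s => K * f s) a b) with (K * RInt f a b)
      by (symmetry; apply (RInt_scal f a b K); auto).
    replace (K * RInt f a b - K * l) with (K * (RInt f a b - l)) by ring.
    rewrite Rabs_mult.
    specialize (H a b Ha Had HMb).
    pose proof (Rabs_pos K).
    apply Rle_lt_trans with ((Rabs K + 1) * Rabs (RInt f a b - l)).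
    + apply Rmult_le_compat_r. apply Rabs_pos. lra.
    + apply Rmult_lt_reg_r with (/ (Rabs K + 1)).
      apply Rinv_0_lt_compat; lra.
      replace ((Rabs K + 1) * Rabs (RInt f a b - l) * / (Rabs K + 1)) with (Rabs (RInt f a b - l)) by (field; lra).
      exact H.
Qed.


Lemma cont_Rpower y u : 0 < u -> continuous (fun s => Rpower s y) u.
Proof.
  intros Hu. apply (ex_derive_continuous (K:=R_AbsRing) (V:=R_NormedModule)). exists (y * Rpower u (y - 1)).
  apply is_derive_Reals. apply derivable_pt_lim_power. auto.
Qed.

Lemma scal_R (x y : R) : scal x y = x * y.
Proof. reflexivity. Qed.
Lemma opp_R (x : R) : opp x = - x.
Proof. reflexivity. Qed.

Lemma Rpower_pos x y : 0 < Rpower x y.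
Proof. unfold Rpower. apply exp_pos. Qed.

Lemma comp_is_RInt (g : R -> R) c p a b : 0 < c -> 0 < a -> 0 < b ->
  (forall u, 0 < u -> continuous g u) ->
  is_RInt (fun y => scal (c * (p * Rpower y (p - 1))) (g (c * Rpower y p))) a b
    (RInt g (c * Rpower a p) (c * Rpower b p)).
Proof.
  intros Hc Ha Hb Hg.
  apply (is_RInt_comp g (fun y => c * Rpower y p) (fun y => c * (p * Rpower y (p - 1)))).
  - intros x Hx. apply Hg. apply Rmult_lt_0_compat; auto. apply Rpower_pos.
  - intros x Hx.
    assert (Hx0 : 0 < x).
    { apply Rlt_le_trans with (Rmin a b); [|apply Hx]. apply Rmin_glb_lt; auto. }
    split.
    + apply is_derive_Reals.
      apply (derivable_pt_lim_scal (fun y => Rpower y p)). apply derivable_pt_lim_power; auto.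
    + apply (continuous_mult (fun _ => c)). apply continuous_const.
      apply (continuous_mult (fun _ => p)). apply continuous_const.
      apply cont_Rpower; auto.
Qed.

Lemma phi_lt c p a d : 0 < c -> 0 < a -> 0 < d -> p * ln a < ln d - ln c -> c * Rpower a p < d.
Proof.
  intros Hc Ha Hd H. unfold Rpower.
  rewrite <- (exp_ln c) at 1 by auto. rewrite <- exp_plus.
  rewrite <- (exp_ln d) by auto. apply exp_increasing. lra.
Qed.

Lemma phi_gt c p a d : 0 < c -> 0 < a -> 0 < d -> p * ln a > ln d - ln c -> c * Rpower a p > d.
Proof.
  intros Hc Ha Hd H. unfold Rpower.
  rewrite <- (exp_ln c) at 1 by auto. rewrite <- exp_plus.
  rewrite <- (exp_ln d) by auto. apply exp_increasing. lra.
Qed.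

Lemma ln_lt_exp a z : 0 < a -> a < exp z -> ln a < z.
Proof. intros Ha H. rewrite <- (ln_exp z). apply ln_increasing; auto. Qed.
Lemma ln_gt_exp a z : 0 < a -> exp z < a -> z < ln a.
Proof. intros Ha H. rewrite <- (ln_exp z). apply ln_increasing; auto. apply exp_pos. Qed.

Lemma imp2_subst (g : R -> R) L c p : 0 < c -> p <> 0 ->
  (forall u, 0 < u -> continuous g u) -> imp2 g L ->
  imp2 (fun s => g (c * Rpower s p) * (c * Rabs p * Rpower s (p - 1))) L.
Proof.
  intros Hc Hp Hg [H1 H2].
  assert (HI : forall a b, 0 < a -> 0 < b ->
     ex_RInt (fun s => g (c * Rpower s p) * (c * Rabs p * Rpower s (p - 1))) a b /\
     RInt (fun s => g (c * Rpower s p) * (c * Rabs p * Rpower s (p - 1))) a b =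
     (if Rlt_dec 0 p then RInt g (c * Rpower a p) (c * Rpower b p)
      else RInt g (c * Rpower b p) (c * Rpower a p))).
  { intros a b Ha Hb.
    pose proof (comp_is_RInt g c p a b Hc Ha Hb Hg) as HR.
    assert (Hpa : 0 < c * Rpower a p) by (apply Rmult_lt_0_compat; auto; apply Rpower_pos).
    assert (Hpb : 0 < c * Rpower b p) by (apply Rmult_lt_0_compat; auto; apply Rpower_pos).
    assert (HexG : ex_RInt g (c * Rpower a p) (c * Rpower b p)).
    { apply (ex_RInt_continuous (V:=R_CompleteNormedModule)). intros z Hz. apply Hg.
      apply Rlt_le_trans with (Rmin (c * Rpower a p) (c * Rpower b p)); [|apply Hz].
      apply Rmin_glb_lt; auto. }
    destruct (Rlt_dec 0 p) as [Hp0|Hp0].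
    - assert (E : forall s, (fun y => scal (c * (p * Rpower y (p - 1))) (g (c * Rpower y p))) s =
          g (c * Rpower s p) * (c * Rabs p * Rpower s (p - 1))).
      { intros s. cbv beta. rewrite Rabs_right by lra. rewrite scal_R. match goal with |- ?a = ?b => change (@eq R a b) end. ring. }
      split.
      + eapply ex_RInt_ext; [intros; apply E|]. eexists; exact HR.
      + rewrite <- (RInt_ext _ _ a b (fun x _ => E x)). apply is_RInt_unique; auto.
    - assert (E : forall s, opp ((fun y => scal (c * (p * Rpower y (p - 1))) (g (c * Rpower y p))) s) =
          g (c * Rpower s p) * (c * Rabs p * Rpower s (p - 1))).
      { intros s. cbv beta. rewrite Rabs_left by lra. rewrite opp_R, scal_R. match goal with |- ?a = ?b => change (@eq R a b) end. ring. }
      assert (Hex : ex_RInt (fun y => scal (c * (p * Rpower y (p - 1))) (g (c * Rpower y p))) a b)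
        by (eexists; exact HR).
      split.
      + apply (ex_RInt_ext _ _ a b (fun x _ => E x)). exact (ex_RInt_opp _ _ _ Hex).
      + rewrite <- (RInt_ext _ _ a b (fun x _ => E x)).
        transitivity (opp (RInt (fun y => scal (c * (p * Rpower y (p - 1))) (g (c * Rpower y p))) a b)).
        { exact (RInt_opp _ _ _ Hex). }
        rewrite (is_RInt_unique _ _ _ _ HR).
        exact (opp_RInt_swap _ _ _ HexG). }
  split.
  - intros a b Ha Hab. apply HI; lra.
  - intros eps He. destruct (H2 eps He) as [d [Hd [M [HM H]]]].
    assert (HM0 : 0 < M) by lra.
    destruct (Rlt_dec 0 p) as [Hp0|Hp0].
    + exists (Rmin (exp ((ln d - ln c) / p)) 1). split. { apply Rmin_glb_lt; [apply exp_pos|lra]. }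
      exists (Rmax (exp ((ln M - ln c) / p)) 1). split.
      { apply Rle_trans with 1. apply Rmin_r. apply Rmax_r. }
      intros a b Ha Had HMb.
      assert (a < exp ((ln d - ln c) / p)) by (eapply Rlt_le_trans; [exact Had|apply Rmin_l]).
      assert (exp ((ln M - ln c) / p) < b) by (eapply Rle_lt_trans; [apply Rmax_l|exact HMb]).
      assert (Hb : 0 < b) by (pose proof (exp_pos ((ln M - ln c) / p)); lra).
      destruct (HI a b Ha Hb) as [_ ->].
      destruct (Rlt_dec 0 p) as [_|]; [|lra].
      apply H.
      * apply Rmult_lt_0_compat; auto; apply Rpower_pos.
      * apply phi_lt; auto. apply ln_lt_exp in H0; auto.
        apply Rmult_lt_compat_l with (r := p) in H0; auto.
        replace (p * ((ln d - ln c) / p)) with (ln d - ln c) in H0 by (field; lra). lra.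
      * apply phi_gt; auto. apply ln_gt_exp in H3; auto.
        apply Rmult_lt_compat_l with (r := p) in H3; auto.
        replace (p * ((ln M - ln c) / p)) with (ln M - ln c) in H3 by (field; lra). lra.
    + assert (Hpn : p < 0) by lra.
      exists (Rmin (exp ((ln M - ln c) / p)) 1). split. { apply Rmin_glb_lt; [apply exp_pos|lra]. }
      exists (Rmax (exp ((ln d - ln c) / p)) 1). split.
      { apply Rle_trans with 1. apply Rmin_r. apply Rmax_r. }
      intros a b Ha Had HMb.
      assert (a < exp ((ln M - ln c) / p)) by (eapply Rlt_le_trans; [exact Had|apply Rmin_l]).
      assert (exp ((ln d - ln c) / p) < b) by (eapply Rle_lt_trans; [apply Rmax_l|exact HMb]).
      assert (Hb : 0 < b) by (pose proof (exp_pos ((ln d - ln c) / p)); lra).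
      destruct (HI a b Ha Hb) as [_ ->].
      destruct (Rlt_dec 0 p) as [|_]; [lra|].
      apply H.
      * apply Rmult_lt_0_compat; auto; apply Rpower_pos.
      * apply phi_lt; auto. apply ln_gt_exp in H3; auto.
        assert (Hq : 0 < - p) by lra.
        apply Rmult_lt_compat_l with (r := - p) in H3; auto.
        replace (- p * ((ln d - ln c) / p)) with (- (ln d - ln c)) in H3 by (field; lra). lra.
      * apply phi_gt; auto. apply ln_lt_exp in H0; auto.
        assert (Hq : 0 < - p) by lra.
        apply Rmult_lt_compat_l with (r := - p) in H0; auto.
        replace (- p * ((ln M - ln c) / p)) with (- (ln M - ln c)) in H0 by (field; lra). lra.
Qed.


Definition g0 (al : R) := fun s => Rpower s (al - 1) * exp (- s).

Lemma cont_expo u : continuous (fun s => exp (- s)) u.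
Proof.
  apply (ex_derive_continuous (K:=R_AbsRing) (V:=R_NormedModule)).
  auto_derive. auto.
Qed.

Lemma g0_cont al u : 0 < u -> continuous (g0 al) u.
Proof.
  intros Hu. unfold g0.
  apply (continuous_mult (fun s => Rpower s (al - 1)) (fun s => exp (- s))).
  apply cont_Rpower; auto. apply cont_expo.
Qed.

Lemma g0_ex al a b : 0 < a -> 0 < b -> ex_RInt (g0 al) a b.
Proof.
  intros Ha Hb. apply (ex_RInt_continuous (V:=R_CompleteNormedModule)).
  intros z Hz. apply g0_cont.
  apply Rlt_le_trans with (Rmin a b); [|apply Hz]. apply Rmin_glb_lt; auto.
Qed.

Lemma g0_nonneg al a b : 0 < a -> a <= b -> 0 <= RInt (g0 al) a b.
Proof.
  intros Ha Hab. apply RInt_ge_0; auto. apply g0_ex; lra.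
  intros x Hx. unfold g0. apply Rlt_le. apply Rmult_lt_0_compat. apply Rpower_pos. apply exp_pos.
Qed.

Lemma Rpower_1_base y : Rpower 1 y = 1.
Proof. unfold Rpower. rewrite ln_1, Rmult_0_r. apply exp_0. Qed.

Lemma partA al a : 0 < al -> 0 < a -> a <= 1 -> RInt (g0 al) a 1 <= / al.
Proof.
  intros Hal Ha Ha1.
  assert (HD : is_RInt (fun u => Rpower u (al - 1)) a 1
                 (minus (/ al * Rpower 1 al) (/ al * Rpower a al))).
  { apply (is_RInt_derive (fun u => / al * Rpower u al)).
    - intros x Hx. assert (0 < x).
      { apply Rlt_le_trans with (Rmin a 1); [|apply Hx]. apply Rmin_glb_lt; lra. }
      apply is_derive_Reals.
      replace (Rpower x (al - 1)) with (/ al * (al * Rpower x (al - 1))) by (field; lra).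
      apply (derivable_pt_lim_scal (fun y => Rpower y al)). apply derivable_pt_lim_power; auto.
    - intros x Hx. apply cont_Rpower.
      apply Rlt_le_trans with (Rmin a 1); [|apply Hx]. apply Rmin_glb_lt; lra. }
  apply Rle_trans with (RInt (fun u => Rpower u (al - 1)) a 1).
  - apply RInt_le; auto. apply g0_ex; lra. eexists; exact HD.
    intros x Hx. unfold g0. rewrite <- (Rmult_1_r (Rpower x (al - 1))) at 2.
    apply Rmult_le_compat_l. apply Rlt_le, Rpower_pos.
    rewrite <- exp_0. apply Rlt_le, exp_increasing. lra.
  - rewrite (is_RInt_unique _ _ _ _ HD). rewrite Rpower_1_base.
    change (minus ?x ?y) with (x - y).
    pose proof (Rpower_pos a al). assert (0 < / al) by (apply Rinv_0_lt_compat; lra).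
    nra.
Qed.

Lemma pw al u : 0 < al -> 1 <= u ->
  Rpower u (al - 1) * exp (- u) <= Rpower (al + 1) (al + 1) * / (u * u).
Proof.
  intros Hal Hu. set (m := al + 1).
  assert (Hm : 0 < m) by (unfold m; lra).
  assert (E1 : Rpower u (al - 1) = Rpower u m * / (u * u)).
  { replace (al - 1) with (m + - (1 + 1)) by (unfold m; ring).
    rewrite Rpower_plus, Rpower_Ropp, Rpower_plus, Rpower_1 by lra. reflexivity. }
  assert (E2 : Rpower u m <= Rpower m m * exp u).
  { replace u with (u / m * m) at 1 by (field; lra).
    rewrite <- Rpower_mult_distr by (try apply Rdiv_lt_0_compat; lra).
    rewrite Rmult_comm. apply Rmult_le_compat_l. apply Rlt_le, Rpower_pos.
    apply Rle_trans with (Rpower (exp (u / m)) m).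
    - apply Rle_Rpower_l. lra. split. apply Rdiv_lt_0_compat; lra.
      pose proof (exp_ineq1_le (u / m)). lra.
    - unfold Rpower at 1. rewrite ln_exp. right. f_equal. field. lra. }
  rewrite E1.
  assert (0 < / (u * u)) by (apply Rinv_0_lt_compat; nra).
  assert (Hee : exp u * exp (- u) = 1) by (rewrite <- exp_plus, Rplus_opp_r; apply exp_0).
  pose proof (exp_pos (- u)).
  apply Rle_trans with (Rpower m m * exp u * exp (- u) * / (u * u)).
  - replace (Rpower u m * / (u * u) * exp (- u)) with (Rpower u m * exp (- u) * / (u * u)) by ring.
    apply Rmult_le_compat_r. lra. apply Rmult_le_compat_r; lra.
  - replace (Rpower m m * exp u * exp (- u) * / (u * u)) with (Rpower m m * (exp u * exp (- u)) * / (u * u)) by ring.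
    rewrite Hee. lra.
Qed.

Lemma partB al b : 0 < al -> 1 <= b -> RInt (g0 al) 1 b <= Rpower (al + 1) (al + 1).
Proof.
  intros Hal Hb. set (K := Rpower (al + 1) (al + 1)).
  assert (HK : 0 < K) by apply Rpower_pos.
  assert (HD : is_RInt (fun u => K * / (u * u)) 1 b (minus (- (K * / b)) (- (K * / 1)))).
  { apply (is_RInt_derive (fun u => - (K * / u))).
    - intros x Hx. assert (1 <= x) by (rewrite Rmin_left in Hx; lra).
      auto_derive. lra. field. lra.
    - intros x Hx. assert (1 <= x) by (rewrite Rmin_left in Hx; lra).
      apply (ex_derive_continuous (K:=R_AbsRing) (V:=R_NormedModule)).
      auto_derive. nra. }
  apply Rle_trans with (RInt (fun u => K * / (u * u)) 1 b).
  - apply RInt_le; auto. apply g0_ex; lra. eexists; exact HD.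
    intros x Hx. unfold g0. apply pw; lra.
  - rewrite (is_RInt_unique _ _ _ _ HD). change (minus ?x ?y) with (x - y).
    assert (0 < K * / b) by (apply Rmult_lt_0_compat; auto; apply Rinv_0_lt_compat; lra).
    rewrite Rinv_1. lra.
Qed.


Lemma chas al a b c : 0 < a -> 0 < b -> 0 < c ->
  RInt (g0 al) a c = RInt (g0 al) a b + RInt (g0 al) b c.
Proof.
  intros. symmetry. apply (RInt_Chasles (V:=R_CompleteNormedModule)); apply g0_ex; auto.
Qed.

Lemma g0_bound al a b : 0 < al -> 0 < a -> a <= b ->
  RInt (g0 al) a b <= / al + Rpower (al + 1) (al + 1).
Proof.
  intros Hal Ha Hab.
  set (a' := Rmin a 1). set (b' := Rmax b 1).
  assert (Ha1 : a' <= a) by apply Rmin_l. assert (Ha2 : a' <= 1) by apply Rmin_r.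
  assert (Hb1 : b <= b') by apply Rmax_l. assert (Hb2 : 1 <= b') by apply Rmax_r.
  assert (Ha0 : 0 < a') by (apply Rmin_glb_lt; lra).
  assert (E1 : RInt (g0 al) a' b' = RInt (g0 al) a' a + RInt (g0 al) a b + RInt (g0 al) b b').
  { rewrite (chas al a' a b'), (chas al a b b'); lra. }
  assert (E2 : RInt (g0 al) a' b' = RInt (g0 al) a' 1 + RInt (g0 al) 1 b') by (apply chas; lra).
  pose proof (g0_nonneg al a' a Ha0 Ha1).
  pose proof (g0_nonneg al b b' ltac:(lra) Hb1).
  pose proof (partA al a' Hal Ha0 Ha2).
  pose proof (partB al b' Hal Hb2).
  lra.
Qed.

Lemma gamma_exists al : 0 < al -> exists L, improper_integral (fun s => Rpower s (al - 1) * exp (- s)) L.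
Proof.
  intros Hal.
  set (E := fun y => exists a b, 0 < a /\ a <= b /\ y = RInt (g0 al) a b).
  assert (Hb : bound E).
  { exists (/ al + Rpower (al + 1) (al + 1)). intros y [a [b [Ha [Hab ->]]]].
    apply g0_bound; auto. }
  assert (Hne : exists y, E y) by (exists (RInt (g0 al) 1 1); exists 1, 1; repeat split; lra).
  destruct (completeness E Hb Hne) as [L [HL1 HL2]].
  exists L. apply imp2_imp. split.
  - intros a b Ha Hab. apply (g0_ex al a b); lra.
  - intros eps He.
    assert (Hex : exists y, E y /\ L - eps < y).
    { apply NNPP. intros Hn. assert (L <= L - eps); [|lra].
      apply HL2. intros y Hy. apply Rnot_lt_le. intros Hlt. apply Hn. exists y; auto. }
    destruct Hex as [y [[a0 [b0 [Ha0 [Hab0 ->]]]] Hy]].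
    exists a0; split; auto. exists b0; split; auto.
    intros a b Ha Had HMb.
    assert (Eq : RInt (g0 al) a b = RInt (g0 al) a a0 + RInt (g0 al) a0 b0 + RInt (g0 al) b0 b).
    { rewrite (chas al a a0 b), (chas al a0 b0 b); lra. }
    pose proof (g0_nonneg al a a0 Ha ltac:(lra)).
    pose proof (g0_nonneg al b0 b ltac:(lra) ltac:(lra)).
    assert (RInt (g0 al) a b <= L) by (apply HL1; exists a, b; repeat split; lra).
    unfold g0 in *.
    rewrite Rabs_left1; lra.
Qed.

Lemma gamma_imp2 al : 0 < al -> imp2 (fun s => Rpower s (al - 1) * exp (- s)) (Gamma al).
Proof.
  intros Hal. apply imp_imp2. unfold Gamma.
  apply epsilon_spec. apply gamma_exists; auto.
Qed.


Ltac pos := repeat match goal with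
 | |- 0 < _ * _ => apply Rmult_lt_0_compat
 | |- 0 < / _ => apply Rinv_0_lt_compat
 | |- 0 < _ / _ => apply Rdiv_lt_0_compat
 | |- 0 < _ + _ => apply Rplus_lt_0_compat
 | |- 0 < exp _ => apply exp_pos
 | |- 0 < Rpower _ _ => apply Rpower_pos
 | _ => assumption
end.

Ltac lnify := repeat first [ rewrite ln_mult by pos | rewrite ln_Rinv by pos
  | rewrite ln_div by pos | rewrite ln_exp | rewrite ln_Rpower ].

Lemma Rpower_div x s y : 0 < x -> 0 < s -> Rpower (x / s) y = Rpower x y * Rpower s (- y).
Proof.
  intros. unfold Rdiv. rewrite <- Rpower_mult_distr by pos.
  f_equal. unfold Rpower. rewrite ln_Rinv by auto. f_equal. ring.
Qed.

Definition D1 (gamma mu x t : R) : R :=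
  gamma * Rpower (x / t) (mu * gamma - 1) * exp (- Rpower (x / t) gamma) / t.
Definition Dn (gamma mu x t : R) : R :=
  gamma * Rpower (x / t) (- mu * gamma - 1) * exp (- Rpower (x / t) (- gamma)) / t.

Lemma Gdens_D g m x t : Gdens g m x t = D1 g m x t * / Gamma m.
Proof. unfold Gdens, D1. unfold Rdiv. rewrite Rinv_mult. ring. Qed.
Lemma Gdensn_D g m x t : Gdens_neg g m x t = Dn g m x t * / Gamma m.
Proof. unfold Gdens_neg, Dn. unfold Rdiv. rewrite Rinv_mult. ring. Qed.

Lemma id1 g m1 m2 x t s : 0 < g -> 0 < x -> 0 < t -> 0 < s ->
  D1 g m1 x s * Dn g m2 s t =
  g * (Rpower x (g * m1 - 1) * Rpower t (g * m2) / Rpower (Rpower x g + Rpower t g) (m1 + m2)) *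
  (Rpower ((Rpower x g + Rpower t g) * Rpower s (- g)) (m1 + m2 - 1) *
   exp (- ((Rpower x g + Rpower t g) * Rpower s (- g))) *
   ((Rpower x g + Rpower t g) * Rabs (- g) * Rpower s (- g - 1))).
Proof.
  intros Hg Hx Ht Hs. unfold D1, Dn.
  rewrite Rabs_Ropp, Rabs_right by lra.
  assert (HE : - Rpower (x / s) g + - Rpower (s / t) (- g) =
               - ((Rpower x g + Rpower t g) * Rpower s (- g))).
  { rewrite !Rpower_div by auto. rewrite Ropp_involutive. ring. }
  apply ln_inv; [pos|pos|].
  lnify. lra.
Qed.

Lemma id2 g m1 m2 x t s : 0 < g -> 0 < x -> 0 < t -> 0 < s ->
  D1 g m1 (x / s) (sqrt t) * Dn g m2 s (sqrt t) / s =
  g * (Rpower x (g * m1 - 1) * Rpower t (g * m2) / Rpower (Rpower x g + Rpower t g) (m1 + m2)) *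
  (Rpower ((Rpower t (- (g / 2)) * (Rpower x g + Rpower t g)) * Rpower s (- g)) (m1 + m2 - 1) *
   exp (- ((Rpower t (- (g / 2)) * (Rpower x g + Rpower t g)) * Rpower s (- g))) *
   ((Rpower t (- (g / 2)) * (Rpower x g + Rpower t g)) * Rabs (- g) * Rpower s (- g - 1))).
Proof.
  intros Hg Hx Ht Hs. unfold D1, Dn.
  rewrite Rabs_Ropp, Rabs_right by lra.
  rewrite <- (Rpower_sqrt t) by auto.
  assert (HE : - Rpower (x / s / Rpower t (/ 2)) g + - Rpower (s / Rpower t (/ 2)) (- g) =
               - ((Rpower t (- (g / 2)) * (Rpower x g + Rpower t g)) * Rpower s (- g))).
  { rewrite !Rpower_div by pos. rewrite Ropp_involutive, !Rpower_mult.
    replace (/ 2 * - g) with (- (g / 2)) by field.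
    replace (Rpower t (/ 2 * g)) with (Rpower t (- (g / 2)) * Rpower t g)
      by (rewrite <- Rpower_plus; f_equal; field).
    ring. }
  apply ln_inv; [pos|pos|].
  lnify. lra.
Qed.

Lemma id3 g m x t s : 0 < g -> 0 < x -> 0 < t -> 0 < s ->
  Dn g m x s * D1 g m s t =
  g * (Rpower x (g * m - 1) * Rpower t (g * m) / Rpower (Rpower x g + Rpower t g) (m + m)) *
  (Rpower ((Rpower x (- g) * Rpower t (- g) * (Rpower x g + Rpower t g)) * Rpower s g) (m + m - 1) *
   exp (- ((Rpower x (- g) * Rpower t (- g) * (Rpower x g + Rpower t g)) * Rpower s g)) *
   ((Rpower x (- g) * Rpower t (- g) * (Rpower x g + Rpower t g)) * Rabs g * Rpower s (g - 1))).
Proof.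
  intros Hg Hx Ht Hs. unfold D1, Dn.
  rewrite Rabs_right by lra.
  assert (HE : - Rpower (x / s) (- g) + - Rpower (s / t) g =
               - ((Rpower x (- g) * Rpower t (- g) * (Rpower x g + Rpower t g)) * Rpower s g)).
  { rewrite !Rpower_div by pos. rewrite Ropp_involutive, !Rpower_Ropp.
    pose proof (Rpower_pos x g). pose proof (Rpower_pos t g).
    field. lra. }
  apply ln_inv; [pos|pos|].
  lnify. lra.
Qed.


Lemma key al c p : 0 < al -> 0 < c -> p <> 0 ->
  imp2 (fun s => Rpower (c * Rpower s p) (al - 1) * exp (- (c * Rpower s p)) *
                 (c * Rabs p * Rpower s (p - 1))) (Gamma al).
Proof.
  intros Hal Hc Hp.
  exact (imp2_subst (fun u => Rpower u (al - 1) * exp (- u)) (Gamma al) c p Hc Hp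
           (fun u Hu => g0_cont al u Hu) (gamma_imp2 al Hal)).
Qed.

Theorem mainTheorem4 (gamma mu1 mu2 : R) :
  0 < gamma -> 0 < mu1 -> 0 < mu2 ->
  forall t : R, 0 < t ->
  (forall x : R, 0 < x ->
     improper_integral (fun s => Gdens gamma mu1 x s * Gdens_neg gamma mu2 s t)
       (q_dens gamma mu1 mu2 x t)) /\
  (forall x : R, 0 < x ->
     improper_integral
       (fun s => Gdens gamma mu1 (x / s) (sqrt t) * Gdens_neg gamma mu2 s (sqrt t) / s)
       (q_dens gamma mu1 mu2 x t)) /\
  (forall mu : R, 0 < mu ->
   forall x : R, 0 < x ->
     improper_integral (fun s => Gdens_neg gamma mu x s * Gdens gamma mu s t)
       (q_dens gamma mu mu x t)).
Proof.
  intros Hg H1 H2 t Ht. split; [|split].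
  - intros x Hx. apply imp2_imp.
    set (K := gamma * (Rpower x (gamma * mu1 - 1) * Rpower t (gamma * mu2) /
               Rpower (Rpower x gamma + Rpower t gamma) (mu1 + mu2)) / (Gamma mu1 * Gamma mu2)).
    replace (q_dens gamma mu1 mu2 x t) with (K * Gamma (mu1 + mu2))
      by (unfold q_dens, K; unfold Rdiv; ring).
    eapply imp2_ext; [|apply imp2_scal, (key (mu1 + mu2) (Rpower x gamma + Rpower t gamma) (- gamma))];
      [| lra | pos | lra].
    intros s Hs. cbv beta. symmetry. rewrite Gdens_D, Gdensn_D.
    transitivity (D1 gamma mu1 x s * Dn gamma mu2 s t * (/ Gamma mu1 * / Gamma mu2)); [ring|].
    rewrite (id1 gamma mu1 mu2 x t s) by auto.
    unfold K. unfold Rdiv. rewrite Rinv_mult. ring.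
  - intros x Hx. apply imp2_imp.
    set (K := gamma * (Rpower x (gamma * mu1 - 1) * Rpower t (gamma * mu2) /
               Rpower (Rpower x gamma + Rpower t gamma) (mu1 + mu2)) / (Gamma mu1 * Gamma mu2)).
    replace (q_dens gamma mu1 mu2 x t) with (K * Gamma (mu1 + mu2))
      by (unfold q_dens, K; unfold Rdiv; ring).
    eapply imp2_ext; [|apply imp2_scal,
      (key (mu1 + mu2) (Rpower t (- (gamma / 2)) * (Rpower x gamma + Rpower t gamma)) (- gamma))];
      [| lra | pos | lra].
    intros s Hs. cbv beta. symmetry. rewrite Gdens_D, Gdensn_D.
    transitivity (D1 gamma mu1 (x / s) (sqrt t) * Dn gamma mu2 s (sqrt t) / s * (/ Gamma mu1 * / Gamma mu2));
      [unfold Rdiv; ring|].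
    rewrite (id2 gamma mu1 mu2 x t s) by auto.
    unfold K. unfold Rdiv. rewrite Rinv_mult. ring.
  - intros mu Hmu x Hx. apply imp2_imp.
    set (K := gamma * (Rpower x (gamma * mu - 1) * Rpower t (gamma * mu) /
               Rpower (Rpower x gamma + Rpower t gamma) (mu + mu)) / (Gamma mu * Gamma mu)).
    replace (q_dens gamma mu mu x t) with (K * Gamma (mu + mu))
      by (unfold q_dens, K; unfold Rdiv; ring).
    eapply imp2_ext; [|apply imp2_scal,
      (key (mu + mu) (Rpower x (- gamma) * Rpower t (- gamma) * (Rpower x gamma + Rpower t gamma)) gamma)];
      [| lra | pos | lra].
    intros s Hs. cbv beta. symmetry. rewrite Gdens_D, Gdensn_D.
    transitivity (Dn gamma mu x s * D1 gamma mu s t * (/ Gamma mu * / Gamma mu)); [ring|].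
    rewrite (id3 gamma mu x t s) by auto.
    unfold K. unfold Rdiv. rewrite Rinv_mult. ring.
Qed.
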